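(* Let $G$ be a network with three sources $s_1,s_2,s_3$ and three terminals $t_1,t_2,t_3$ such that every pair $(s_i,t_j)$ is connected by a directed path. If $G$ contains a vertex $v$ with $(c_s(v),c_t(v))\in\{(3,3),(2,3),(3,2)\}$, then for every finite field $\mathbb{F}$ there exists a linear network code over $\mathbb{F}$ under which every terminal recovers $X_1+X_2+X_3$.
   Context: A network is a finite directed acyclic graph (parallel edges allowed), every edge of unit capacity carrying one symbol of a finite field $\mathbb{F}$. Sources have no incoming edges; source $s_i$ holds $X_i\in\mathbb{F}$ (independent, uniform). Terminals have no outgoing edges. In a linear network code each edge leaving a non-source vertex carries an $\mathbb{F}$-linear combination of the symbols on the edges entering its tail; an edge leaving a source carries a multiple of its symbol. For a vertex $v$, $c_s(v)$ is the number of sources $s_i$ with a directed path from $s_i$ to $v$ (a vertex reaches itself), and $c_t(v)$ is the number of terminals $t_j$ with a directed path from $v$ to $t_j$; the pair $(c_s(v),c_t(v))$ is the type of $v$. *)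

(* Defs.v *)
From HB Require Import structures.
From mathcomp Require Import all_boot all_order all_algebra all_field.
Set Implicit Arguments. Unset Strict Implicit. Unset Printing Implicit Defensive.
Import GRing.Theory.
Local Open Scope ring_scope.

(* A network: finite vertex type V, finite edge type E (parallel edges
   allowed), each edge e going from [tl e] to [hd e]. *)

Definition adj (V E : finType) (tl hd : E -> V) : rel V :=
  fun u w => [exists e : E, (tl e == u) && (hd e == w)].

Definition reaches (V E : finType) (tl hd : E -> V) (u w : V) : bool :=
  connect (adj tl hd) u w.

Definition acyclic (V E : finType) (tl hd : E -> V) : Prop :=
  forall e : E, ~~ reaches tl hd (hd e) (tl e).

Definition c_s (V E : finType) (tl hd : E -> V) (s : 'I_3 -> V) (v : V) : nat :=
  #|[set i : 'I_3 | reaches tl hd (s i) v]|.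
Definition c_t (V E : finType) (tl hd : E -> V) (t : 'I_3 -> V) (v : V) : nat :=
  #|[set j : 'I_3 | reaches tl hd v (t j)]|.

(* A linear network code over F is given by
   - a : E -> F : an edge leaving source s_i carries  a e * X_i,
   - b : E -> E -> F : an edge e leaving a non-source vertex carries
       \sum_{e' entering tl e} b e' e * (symbol on e').
   [consistent ... X Y] says that Y : E -> F is the edge-symbol assignment
   produced by the code on source messages X.  (On a DAG there is exactly
   one such Y for every X.) *)
Definition consistent (V E : finType) (tl hd : E -> V) (s : 'I_3 -> V)
    (F : fieldType) (a : E -> F) (b : E -> E -> F)
    (X : 'I_3 -> F) (Y : E -> F) : Prop :=
  forall e : E,
    (forall i : 'I_3, tl e = s i -> Y e = a e * X i) /\
    ((forall i : 'I_3, tl e <> s i) ->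
       Y e = \sum_(e' : E | hd e' == tl e) b e' e * Y e').

Definition recovers_sum (V E : finType) (hd : E -> V) (t : 'I_3 -> V)
    (F : fieldType) (d : 'I_3 -> E -> F) (X : 'I_3 -> F) (Y : E -> F)
    (j : 'I_3) : Prop :=
  \sum_(e : E | hd e == t j) d j e * Y e = \sum_(i < 3) X i.

(* Main.v *)
Require Import Defs.
From HB Require Import structures.
From mathcomp Require Import all_boot all_order all_algebra all_field.
Set Implicit Arguments. Unset Strict Implicit. Unset Printing Implicit Defensive.
Import GRing.Theory.
Local Open Scope ring_scope.

Lemma connect_last (T : finType) (r : rel T) x y :
  connect r x y -> x != y -> exists w, [/\ connect r x w, r w y & w != y].
Proof.
move/connectP=> [p]; elim: p x => [|z p IH] x /=; first by move=> _ ->; rewrite eqxx.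
move=> /andP[rxz pth] ly xy; case: (eqVneq z y) => [ezy|nzy].
  by subst z; exists x; split => //; exact: connect0.
have [w [c1 c2 c3]] := IH z pth ly nzy.
by exists w; split => //; exact: connect_trans (connect1 rxz) c1.
Qed.

Lemma connect_exit (T : finType) (r : rel T) (P : pred T) x z :
  connect r x z -> P x -> ~~ P z ->
  exists w w', [/\ connect r x w, r w w', P w & ~~ P w'].
Proof.
move/connectP=> [p]; elim: p x => [|y p IH] x /=; first by move=> _ -> ->.
move=> /andP[rxy pth] lz Px nPz; case Py: (P y).
  have [w [w' [c1 c2 c3 c4]]] := IH y pth lz Py nPz.
  by exists w, w'; split => //; exact: connect_trans (connect1 rxy) c1.
by exists x, y; split; [exact: connect0 | exact: rxy | exact: Px | rewrite Py].
Qed.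

Lemma fconnect_cmp (T : finType) (f : T -> T) x a b :
  fconnect f x a -> fconnect f x b -> fconnect f a b || fconnect f b a.
Proof.
move=> /iter_findex <- /iter_findex <-.
set n := findex f x a; set m := findex f x b.
case: (leqP n m) => [le|lt].
  by rewrite -(subnK le) iterD fconnect_iter.
by rewrite -(subnK (ltnW lt)) iterD fconnect_iter orbT.
Qed.

Lemma fconnect_closed (T : finType) (f : T -> T) (P : pred T) x y :
  (forall u, P u -> P (f u)) -> fconnect f x y -> P x -> P y.
Proof.
move=> cl /connectP[p]; elim: p x => [|z p IH] x /=; first by move=> _ ->.
by move=> /andP[/eqP <- pth] ly Px; apply: IH pth ly (cl _ Px).
Qed.

Section Net.
Variables (V E : finType) (tl hd : E -> V) (s t : 'I_3 -> V).
Hypothesis acyc : acyclic tl hd.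
Hypothesis s_inj : injective s.
Hypothesis t_inj : injective t.
Hypothesis hd_s : forall (i : 'I_3) (e : E), hd e != s i.
Hypothesis tl_t : forall (j : 'I_3) (e : E), tl e != t j.

Local Notation R := (reaches tl hd).

Lemma R_edge e : R (tl e) (hd e).
Proof. apply: connect1; apply/existsP; exists e; by rewrite !eqxx. Qed.

Lemma R_refl u : R u u.
Proof. exact: connect0. Qed.

Lemma R_trans u w x : R u w -> R w x -> R u x.
Proof. exact: connect_trans. Qed.

Lemma hd_neq_tl e : hd e != tl e.
Proof. apply/eqP => eq; have := acyc e; by rewrite eq R_refl. Qed.

Lemma R_last x y : R x y -> x != y -> exists e, hd e = y /\ R x (tl e).
Proof.
move=> r xy; have [w [c1 /existsP[e /andP[/eqP t1 /eqP h1]] _]] := connect_last r xy.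
by exists e; rewrite t1.
Qed.

Lemma R_first x y : R x y -> x != y -> exists e, tl e = x /\ R (hd e) y.
Proof.
move/connectP=> [[|z p]] /=; first by move=> _ ->; rewrite eqxx.
move=> /andP[/existsP[e /andP[/eqP t1 /eqP h1]] pth] ly _.
exists e; split => //; rewrite h1; apply/connectP; by exists p.
Qed.

Lemma R_to_src x i : R x (s i) -> x = s i.
Proof.
move=> r; apply/eqP; apply/negPn/negP => ne.
have [e [he _]] := R_last r ne; by move: (hd_s i e); rewrite he eqxx.
Qed.

Lemma R_from_term x j : R (t j) x -> x = t j.
Proof.
move=> r; apply/eqP; apply/negPn/negP => ne; rewrite eq_sym in ne.
have [e [te _]] := R_first r ne; by move: (tl_t j e); rewrite te eqxx.
Qed.

Lemma R_antisym x y : R x y -> R y x -> x = y.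
Proof.
move=> r1 r2; apply/eqP; apply/negPn/negP => ne.
have [e [te re]] := R_first r1 ne.
have := acyc e; by rewrite te (R_trans re r2).
Qed.


Hypothesis conn : forall i j : 'I_3, R (s i) (t j).

Lemma other (i : 'I_3) : exists i' : 'I_3, i' != i.
Proof.
case: (eqVneq i ord0) => [->|ne]; last by exists ord0; rewrite eq_sym.
by exists (inord 1); apply/eqP => /(congr1 val); rewrite /= inordK.
Qed.

Lemma t_not_s j i : t j != s i.
Proof.
apply/eqP => eq; have [i' ne] := other i.
have := conn i' j; rewrite eq => /R_to_src /s_inj /eqP; by rewrite (negbTE ne).
Qed.

Definition mu u := #|[set w | R w u]|.

Lemma mu_edge e : (mu (tl e) < mu (hd e))%N.
Proof.
apply: proper_card; apply/properP; split.
  by apply/subsetP => w; rewrite !inE => r; exact: R_trans r (R_edge e).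
by exists (hd e); rewrite !inE ?R_refl //; exact: acyc.
Qed.

Lemma natr_bool (K : fieldType) (b : bool) : (b%:R : K) = if b then 1 else 0.
Proof. by case: b. Qed.

Lemma key (K : fieldType) (P : pred E) (c : V -> 'I_3 -> bool) :
 (forall i k, c (s i) k = (i == k)) ->
 (forall u k, (forall i, u != s i) -> c u k -> exists e, [/\ P e, hd e = u & c (tl e) k]) ->
 (forall e1 e2 k, P e1 -> P e2 -> hd e1 = hd e2 -> c (tl e1) k -> c (tl e2) k -> e1 = e2) ->
 (forall e k, P e -> c (tl e) k -> c (hd e) k) ->
 (forall j k, c (t j) k) ->
 exists (a : E -> K) (b : E -> E -> K) (d : 'I_3 -> E -> K),
   forall X Y, consistent tl hd s a b X Y -> forall j, recovers_sum hd t d X Y j.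
Proof.
move=> C0 C1 C2 C3 C4.
exists (fun _ => 1), (fun e' _ => if P e' then 1 else 0), (fun _ e => if P e then 1 else 0).
move=> X Y cons.
pose form u := \sum_(k < 3) ((c u k)%:R : K) * X k.
have inner : forall u, (forall i, u != s i) ->
    (forall e', hd e' = u -> P e' -> Y e' = form (tl e')) ->
    \sum_(e' | hd e' == u) (if P e' then 1 else 0) * Y e' = form u.
  move=> u nsu IH.
  transitivity (\sum_(e' | hd e' == u) \sum_(k < 3) (((P e' && c (tl e') k)%:R : K) * X k)).
    apply: eq_bigr => e' /eqP he'; case Pe: (P e').
      by rewrite mul1r (IH e' he' Pe).
    by rewrite mul0r big1 // => k _; rewrite mul0r.
  rewrite exchange_big /form; apply: eq_bigr => k _; rewrite -mulr_suml; congr (_ * _).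
  case cuk: (c u k).
    have [e0 [Pe0 he0 ce0]] := C1 u k nsu cuk.
    rewrite (bigD1 e0) /=; last by rewrite he0.
    rewrite Pe0 ce0 big1 ?addr0 // => e' /andP[/eqP he' ne'].
    case: (boolP (P e' && c (tl e') k)) => [/andP[Pe' ce']|] //.
      by move: ne'; rewrite (C2 e' e0 k Pe' Pe0) ?eqxx // he' he0.
  rewrite big1 ?mulr0n // => e' /eqP he'; case: (boolP (P e' && c (tl e') k)) => [/andP[Pe' ce']|].
    by move: (C3 e' k Pe' ce'); rewrite he' cuk.
  by [].
have edge : forall n e, (mu (tl e) < n)%N -> P e -> Y e = form (tl e).
  elim=> // n IHn e lt Pe; have [Hs Hn] := cons e.
  case: (pickP (fun i => tl e == s i)) => [i /eqP ti|nsrc].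
    rewrite (Hs i ti) /form ti (bigD1 i) //= C0 eqxx mul1r big1 ?addr0 // => k ne.
    by rewrite C0 eq_sym (negbTE ne) mul0r.
  have nsrc' : forall i, tl e <> s i by move=> i eq; move: (nsrc i); rewrite eq eqxx.
  rewrite (Hn nsrc'); apply: inner => [i|e' he' Pe']; first by apply/eqP; exact: nsrc'.
  apply: IHn Pe'; have := mu_edge e'; rewrite he' => lt'.
  exact: leq_trans lt' lt.
move=> j; rewrite /recovers_sum.
rewrite inner => [|i|e' he' Pe']; last by apply: (edge (mu (tl e')).+1).
  by rewrite /form; apply: eq_bigr => k _; rewrite C4 mul1r.
exact: t_not_s.
Qed.


Lemma fconnect_last (f : V -> V) x y :
  fconnect f x y -> x != y -> exists w, [/\ fconnect f x w, f w = y & w != y].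
Proof. by move=> c ne; have [w [c1 /eqP c2 c3]] := connect_last c ne; exists w. Qed.

Definition ptr (z : V) (Q : pred V) (u : V) : option E :=
  if u == z then None else
  if [pick e | (tl e == u) && R (hd e) z && Q (hd e)] is Some e then Some e
  else [pick e | (tl e == u) && R (hd e) z].

Definition fp z Q u := if ptr z Q u is Some e then hd e else u.

Lemma ptr_spec z Q u e : ptr z Q u = Some e -> [/\ tl e = u, R (hd e) z & u != z].
Proof.
rewrite /ptr; case: eqP => // /eqP nz.
case: pickP => [e' /andP[/andP[/eqP te r] _] [<-] //|_].
by case: pickP => // e' /andP[/eqP te r] [<-].
Qed.

Lemma ptr_ex z Q u : R u z -> u != z -> exists e, ptr z Q u = Some e.
Proof.
move=> r nz; rewrite /ptr (negbTE nz).
case: pickP => [e' _|_]; first by exists e'.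
case: pickP => [e' _|none]; first by exists e'.
have [e [te re]] := R_first r nz; by move: (none e); rewrite te eqxx re.
Qed.

Lemma ptr_pref z Q u e : ptr z Q u = Some e -> ~~ Q (hd e) ->
  forall e', tl e' = u -> R (hd e') z -> ~~ Q (hd e').
Proof.
rewrite /ptr; case: eqP => // _.
case: pickP => [e0 /andP[_ q] [<-]|none _]; first by rewrite q.
move=> nq e' te re; apply/negP => q; by move: (none e'); rewrite te eqxx re q.
Qed.

Lemma fp_edge z Q u e : ptr z Q u = Some e -> fp z Q u = hd e.
Proof. by rewrite /fp => ->. Qed.

Lemma fp_cases z Q u : fp z Q u = u \/ exists e, [/\ ptr z Q u = Some e, tl e = u & hd e = fp z Q u].
Proof.
rewrite /fp; case E1: (ptr z Q u) => [e|]; last by left.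
by right; exists e; split => //; case: (ptr_spec E1).
Qed.

Lemma fp_ptr z Q u : fp z Q u != u -> exists e, [/\ ptr z Q u = Some e, tl e = u & hd e = fp z Q u].
Proof. by case: (fp_cases z Q u) => [->|//]; rewrite eqxx. Qed.

Lemma fp_R z Q x y : fconnect (fp z Q) x y -> R x y.
Proof.
move=> c; apply: (fconnect_closed (P := fun u => R x u)) c (R_refl x) => u r.
case: (fp_cases z Q u) => [->//|[e [_ te <-]]]; rewrite -te in r; exact: R_trans r (R_edge e).
Qed.

Lemma fp_Rz z Q (P : pred V) x y : (forall e u, tl e = u -> P u -> P (hd e)) ->
  fconnect (fp z Q) x y -> P x -> P y.
Proof.
move=> cl c; apply: (fconnect_closed (P := P)) c => u pu.
case: (fp_cases z Q u) => [->//|[e [_ te <-]]]; exact: cl pu.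
Qed.

Definition mu' u := #|[set w | R u w]|.

Lemma mu'_edge e : (mu' (hd e) < mu' (tl e))%N.
Proof.
apply: proper_card; apply/properP; split.
  by apply/subsetP => w; rewrite !inE => r; exact: R_trans (R_edge e) r.
by exists (tl e); rewrite !inE ?R_refl //; exact: acyc.
Qed.

Lemma fp_term z Q x : R x z -> fconnect (fp z Q) x z.
Proof.
move: {2}(mu' x).+1 (ltnSn (mu' x)) => n; elim: n x => // n IH x lt r.
case: (eqVneq x z) => [->|nz]; first exact: connect0.
have [e pe] := ptr_ex Q r nz; have [te re _] := ptr_spec pe.
apply: connect_trans (fconnect1 _ x) _; rewrite (fp_edge pe); apply: IH re.
by have := mu'_edge e; rewrite te => lt'; exact: leq_trans lt' lt.
Qed.

Lemma fp_uniq_aux z Q w1 w2 : fconnect (fp z Q) w1 w2 ->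
  fp z Q w1 = fp z Q w2 -> fp z Q w2 != w2 -> w1 = w2.
Proof.
move=> c eq ne; apply/eqP; apply/negPn/negP => n12.
move: c; rewrite fconnect_eqVf (negbTE n12) /= eq => c.
have [e [pe te he]] := fp_ptr ne.
have := acyc e; by rewrite te he (fp_R c).
Qed.

Lemma fp_uniq z Q x w1 w2 : fconnect (fp z Q) x w1 -> fconnect (fp z Q) x w2 ->
  fp z Q w1 = fp z Q w2 -> fp z Q w1 != w1 -> fp z Q w2 != w2 -> w1 = w2.
Proof.
move=> c1 c2 eq n1 n2; case/orP: (fconnect_cmp c1 c2) => c.
  exact: fp_uniq_aux c eq n2.
by apply/esym; apply: fp_uniq_aux c (esym eq) n1.
Qed.


Lemma fp_z z Q x y : fconnect (fp z Q) x y -> R x z -> R y z.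
Proof.
move=> c; apply: (fconnect_closed (P := fun u => R u z)) c => u r.
by case: (fp_cases z Q u) => [->//|[e [pe _ <-]]]; case: (ptr_spec pe).
Qed.

Lemma other2 (a b : 'I_3) : exists c : 'I_3, (c != a) && (c != b).
Proof.
case: (pickP (fun c : 'I_3 => (c != a) && (c != b))) => [c h|none]; first by exists c.
have : (#|'I_3| <= #|[set a; b]|)%N.
  apply: subset_leq_card; apply/subsetP => c _; rewrite !inE.
  by move: (none c); case: (c == a); case: (c == b).
by rewrite card_ord cards2 ltnS => /leq_trans /(_ (leq_b1 _)).
Qed.

Section CaseA.
Variables (v : V) (ob : option 'I_3).
Hypothesis hS : forall k, R (s k) v = (ob != Some k).
Hypothesis hT : forall j, R v (t j).

Definition up u := R u v.
Definition dn u := R v u.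
Definition rb u := if ob is Some k0 then R (s k0) u else false.
Definition isB k := ob == Some k.
Definition fv := fp v predT.
Definition pT u := [pick e | (hd e == u) && dn (tl e)].
Definition pS u := [pick e | (hd e == u) && rb (tl e)].
Definition tT u := if pT u is Some e then tl e else u.
Definition tS u := if pS u is Some e then tl e else u.
Definition condT u := dn u && (~~ rb u || rb (tT u) || ~~ dn (tS u)).
Definition condS u := rb u && (~~ dn u || ~~ rb (tT u)).
Definition PA e := (ptr v predT (tl e) == Some e) ||
  (~~ up (hd e) && (((pT (hd e) == Some e) && condT (hd e)) ||
                    ((pS (hd e) == Some e) && condS (hd e)))).
Definition cA u k := if up u then fconnect fv (s k) u else if isB k then rb u else dn u.

Lemma upS k : up (s k) = ~~ isB k.
Proof. by rewrite /up hS. Qed.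

Lemma updn u : up u -> dn u -> u = v.
Proof. by move=> h1 h2; apply: R_antisym. Qed.

Lemma rb_nup u : rb u -> ~~ up u.
Proof.
rewrite /rb /up; case E1: ob => [k0|] // r; apply/negP => r2.
by move: (hS k0); rewrite (R_trans r r2) E1 eqxx.
Qed.

Lemma rb_fw u w : rb u -> R u w -> rb w.
Proof. by rewrite /rb; case: ob => // k0 r1 r2; exact: R_trans r1 r2. Qed.

Lemma dn_fw u w : dn u -> R u w -> dn w.
Proof. exact: R_trans. Qed.

Lemma pT_spec u e : pT u = Some e -> hd e = u /\ dn (tl e).
Proof. by rewrite /pT; case: pickP => // e' /andP[/eqP h d] [<-]. Qed.

Lemma pS_spec u e : pS u = Some e -> hd e = u /\ rb (tl e).
Proof. by rewrite /pS; case: pickP => // e' /andP[/eqP h d] [<-]. Qed.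

Lemma pT_ex u : dn u -> u != v -> exists e, pT u = Some e.
Proof.
move=> d ne; rewrite /pT; case: pickP => [e _|none]; first by exists e.
rewrite eq_sym in ne; have [e [he re]] := R_last d ne.
by move: (none e); rewrite he eqxx /dn re.
Qed.

Lemma pS_ex u : rb u -> (forall i, u != s i) -> exists e, pS u = Some e.
Proof.
move=> r ns; rewrite /pS; case: pickP => [e _|none]; first by exists e.
move: r; rewrite /rb; case E1: ob => [k0|] // r.
have ne : s k0 != u by rewrite eq_sym ns.
have [e [he re]] := R_last r ne.
by move: (none e); rewrite he eqxx /rb E1 re.
Qed.

Lemma cA_v k : cA v k = ~~ isB k.
Proof.
rewrite /cA /up R_refl -upS; apply/idP/idP => [c|u]; first exact: fp_R c.
exact: fp_term.
Qed.

Lemma cA_nup u k : ~~ up u -> cA u k = if isB k then rb u else dn u.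
Proof. by rewrite /cA => /negbTE ->. Qed.

Lemma cA_fw e k : ~~ up (hd e) -> (dn (tl e) || rb (tl e)) -> cA (tl e) k -> cA (hd e) k.
Proof.
move=> nu dr; rewrite (cA_nup _ nu).
case: (boolP (up (tl e))) => [u|nu'].
  case/orP: dr => [d|r]; last by rewrite (negbTE (rb_nup r)) in u.
  rewrite (updn u d) cA_v => /negbTE ->; apply: dn_fw (R_edge e).
  exact: d.
rewrite (cA_nup _ nu'); case: (isB k) => c.
  exact: rb_fw c (R_edge e).
exact: dn_fw c (R_edge e).
Qed.

Lemma PAup e : PA e -> up (hd e) -> ptr v predT (tl e) = Some e.
Proof. by rewrite /PA => /orP[/eqP //|/andP[/negP nu _] u]. Qed.

Lemma PAnup e : PA e -> ~~ up (hd e) ->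
  (pT (hd e) = Some e /\ condT (hd e)) \/ (pS (hd e) = Some e /\ condS (hd e)).
Proof.
rewrite /PA => /orP[/eqP p nu|/andP[_ /orP[/andP[/eqP p c]|/andP[/eqP p c]]] _]; last 2 first.
- by left.
- by right.
have [_ r _] := ptr_spec p; by rewrite /up r in nu.
Qed.

Lemma mixA u e1 e2 k : pT u = Some e1 -> condT u -> pS u = Some e2 -> condS u ->
  cA (tl e1) k -> cA (tl e2) k -> False.
Proof.
move=> p1 ct p2 cs c1 c2.
move: ct cs; rewrite /condT /condS /tT /tS p1 p2 => /andP[d h] /andP[r h'].
rewrite d r /= in h h'; rewrite (negbTE h') /= in h.
have [_ re2] := pS_spec p2; rewrite cA_nup ?(rb_nup re2) // in c2.
case Bk: (isB k) c2 => c2; last by rewrite c2 in h.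
have [_ de1] := pT_spec p1; case: (boolP (up (tl e1))) => ut.
  by rewrite (updn ut de1) cA_v Bk in c1.
by rewrite cA_nup // Bk (negbTE h') in c1.
Qed.

Lemma caseA (K : fieldType) :
 exists (a : E -> K) (b : E -> E -> K) (d : 'I_3 -> E -> K),
   forall X Y, consistent tl hd s a b X Y -> forall j, recovers_sum hd t d X Y j.
Proof.
apply: (@key K PA cA).
-
  move=> i k; rewrite /cA; case: (boolP (up (s i))) => [u|nu].
    apply/idP/idP => [/fp_R /R_to_src /s_inj ->//|/eqP ->]; exact: connect0.
  move: (nu); rewrite upS negbK /isB => /eqP ob_i.
  rewrite ob_i; case: (eqVneq i k) => [<-|ne]; first by rewrite eqxx /rb ob_i R_refl.
  have -> : (Some i == Some k) = false by apply/negbTE; apply: contra ne => /eqP [->].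
  apply/negP => d; move: nu; by rewrite /up -(R_to_src d) R_refl.
-
  move=> u k ns; case: (boolP (up u)) => [uu|nu].
    rewrite /cA uu => c.
    have ne : s k != u by rewrite eq_sym ns.
    have [w [cw fw nw]] := fconnect_last c ne.
    rewrite /fv in fw cw.
    have nw' : fp v predT w != w by rewrite fw eq_sym.
    have [e [pe te he]] := fp_ptr nw'.
    have uw : up w by apply: R_trans _ uu; have := R_edge e; rewrite te he fw.
    exists e; split; first by rewrite /PA te pe eqxx.
      by rewrite he.
    by rewrite te /cA uw.
  rewrite (cA_nup _ nu); case Bk: (isB k) => c.
    have [e pe] := pS_ex c ns; have [he re] := pS_spec pe.
    case cs: (condS u).
      exists e; split => //; first by rewrite /PA he nu pe eqxx cs !orbT.
      by rewrite cA_nup ?Bk //; exact: rb_nup re.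
    move: cs; rewrite /condS c /= => /negbT; rewrite negb_or => /andP[/negPn d /negPn rt].
    have nv : u != v by apply: contra nu => /eqP ->; exact: R_refl.
    have [e' pe'] := pT_ex d nv; have [he' de'] := pT_spec pe'.
    have ct : condT u by rewrite /condT d rt /= !orbT.
    exists e'; split => //; first by rewrite /PA he' nu pe' eqxx ct /= orbT.
    rewrite /tT pe' in rt.
    by rewrite cA_nup ?Bk //; exact: rb_nup rt.
  have nv : u != v by apply: contra nu => /eqP ->; exact: R_refl.
  have [e pe] := pT_ex c nv; have [he de] := pT_spec pe.
  case ct: (condT u).
    exists e; split => //; first by rewrite /PA he nu pe eqxx ct /= orbT.
    case: (boolP (up (tl e))) => [ut|nut].
      by rewrite (updn ut de) cA_v Bk.
    by rewrite cA_nup ?Bk.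
  move: ct; rewrite /condT c /= => /negbT; rewrite !negb_or => /andP[/andP[/negPn r nrt] /negPn dts].
  have [e' pe'] := pS_ex r ns; have [he' re'] := pS_spec pe'.
  have cs : condS u by rewrite /condS r nrt orbT.
  exists e'; split => //; first by rewrite /PA he' nu pe' eqxx cs /= !orbT.
  rewrite /tS pe' in dts.
  by rewrite cA_nup ?Bk //; exact: rb_nup re'.
-
  move=> e1 e2 k P1 P2 h12 c1 c2.
  case: (boolP (up (hd e1))) => [u1|nu1].
    have u2 : up (hd e2) by rewrite -h12.
    have p1 := PAup P1 u1; have p2 := PAup P2 u2.
    have ut1 : up (tl e1) := R_trans (R_edge e1) u1.
    have ut2 : up (tl e2) := R_trans (R_edge e2) u2.
    rewrite /cA ut1 in c1; rewrite /cA ut2 in c2.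
    have t12 : tl e1 = tl e2.
      apply: (fp_uniq c1 c2).
      - by rewrite (fp_edge p1) (fp_edge p2) h12.
      - by rewrite (fp_edge p1) hd_neq_tl.
      - by rewrite (fp_edge p2) hd_neq_tl.
    by move: p1; rewrite t12 p2 => -[->].
  have nu2 : ~~ up (hd e2) by rewrite -h12.
  case: (PAnup P1 nu1) => [[p1 ct1]|[p1 cs1]];
    case: (PAnup P2 nu2) => [[p2 ct2]|[p2 cs2]].
  - by rewrite h12 p2 in p1; case: p1.
  - by rewrite -h12 in p2 cs2; case: (mixA p1 ct1 p2 cs2 c1 c2).
  - by rewrite -h12 in p2 ct2; case: (mixA p2 ct2 p1 cs1 c2 c1).
  - by rewrite h12 p2 in p1; case: p1.
-
  move=> e k Pe; case: (boolP (up (hd e))) => [u|nu].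
    have p := PAup Pe u; have ut : up (tl e) := R_trans (R_edge e) u.
    rewrite /cA ut u -(fp_edge p) => c; exact: connect_trans c (fconnect1 _ _).
  case: (PAnup Pe nu) => [[p _]|[p _]]; apply: (cA_fw nu).
    by have [_ ->] := pT_spec p.
  by have [_ ->] := pS_spec p; rewrite orbT.
-
  move=> j k.
  have nu : ~~ up (t j).
    apply/negP => r; have ev := R_from_term r; have [j' ne] := other j.
    by move: (hT j'); rewrite ev => /R_from_term /t_inj /eqP; rewrite (negbTE ne).
  rewrite cA_nup //; case Bk: (isB k); last exact: hT.
  by move: Bk; rewrite /isB /rb => /eqP ->.
Qed.

End CaseA.


Section CaseB.
Variables (v : V) (j0 : 'I_3).
Hypothesis hS : forall k, R (s k) v.
Hypothesis hT : forall j, R v (t j) = (j != j0).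

Definition t3 := t j0.
Definition upB u := R u v.
Definition w3 u := R u t3.
Definition dnB u := R v u.
Definition fvB := fp v w3.
Definition f3 := fp t3 predT.
Definition exitb x := upB x && w3 x && ~~ w3 (fvB x).
Definition pex x := [pick e | (tl e == x) && w3 (hd e) && ~~ upB (hd e)].
Definition ex3 k u := [exists x, exitb x && fconnect fvB (s k) x &&
   (if pex x is Some e then fconnect f3 (hd e) u else false)].
Definition pTB u := [pick e | (hd e == u) && dnB (tl e)].
Definition PB e := (ptr v w3 (tl e) == Some e) ||
  (exitb (tl e) && (pex (tl e) == Some e)) ||
  (~~ upB (tl e) && (ptr t3 predT (tl e) == Some e)) ||
  (~~ upB (hd e) && ~~ w3 (hd e) && (pTB (hd e) == Some e)).
Definition cB u k := if upB u then fconnect fvB (s k) u else if w3 u then ex3 k u else dnB u.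

Lemma v_nw3 : ~~ w3 v.
Proof. by rewrite /w3 /t3 hT eqxx. Qed.

Lemma t3_nup : ~~ upB t3.
Proof.
apply/negP => r; have ev := R_from_term r.
by move: (hT j0); rewrite eqxx -/t3 ev R_refl.
Qed.

Lemma upB_nw3_ne u : upB u -> w3 u -> u != v.
Proof. by move=> _ w; apply: contraTneq w => ->; exact: v_nw3. Qed.

Lemma dn_nw3 u : dnB u -> ~~ w3 u.
Proof. move=> d; apply/negP => w; have := v_nw3; by rewrite /w3 (R_trans d w). Qed.

Lemma nup_fw e : ~~ upB (tl e) -> ~~ upB (hd e).
Proof. by apply: contra => r; exact: R_trans (R_edge e) r. Qed.

Lemma exit_uniq k x1 x2 : exitb x1 -> exitb x2 ->
  fconnect fvB (s k) x1 -> fconnect fvB (s k) x2 -> x1 = x2.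
Proof.
have aux : forall y1 y2, exitb y1 -> exitb y2 -> fconnect fvB y1 y2 -> y1 = y2.
  move=> y1 y2 /andP[_ n1] /andP[/andP[_ w2] _] c.
  apply/eqP; apply/negPn/negP => ne; move: c; rewrite /fvB fconnect_eqVf (negbTE ne) /=.
  move/fp_R => r; by rewrite /w3 (R_trans r w2) in n1.
move=> e1 e2 c1 c2; case/orP: (fconnect_cmp c1 c2) => c; first exact: aux c.
by apply/esym; exact: aux c.
Qed.

Lemma exit_ex k : exists x, exitb x && fconnect fvB (s k) x.
Proof.
have c : fconnect fvB (s k) v by apply: fp_term.
have [w [w' [cw /eqP fw ww nw']]] := connect_exit c (conn k j0) v_nw3.
exists w; rewrite cw /exitb ww fw nw' /= andbT.
by rewrite !andbT; exact: (@fp_z v w3 (s k) w cw (hS k)).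
Qed.

Lemma pex_spec x e : pex x = Some e -> [/\ tl e = x, w3 (hd e) & ~~ upB (hd e)].
Proof. by rewrite /pex; case: pickP => // e' /andP[/andP[/eqP te w] n] [<-]. Qed.

Lemma pex_ex x : exitb x -> exists e, pex x = Some e.
Proof.
move=> ex; have := ex; move/andP=> [/andP[u w] nw].
rewrite /pex; case: pickP => [e _|none]; first by exists e.
have nt : x != t3 by apply: contraTneq u => ->; exact: t3_nup.
have [e [te re]] := R_first w nt.
have nv := upB_nw3_ne u w.
have [e0 p0] := ptr_ex w3 u nv.
have nq : ~~ w3 (hd e0) by rewrite -(fp_edge p0).
have := ptr_pref p0 nq te; case: (boolP (upB (hd e))) => [uh|nuh].
  by move/(_ uh); rewrite /w3 re.
by move=> _; move: (none e); rewrite te eqxx /w3 re nuh.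
Qed.

Lemma cB_nup_w3 u k : ~~ upB u -> w3 u -> cB u k = ex3 k u.
Proof. by rewrite /cB => /negbTE -> ->. Qed.

Lemma cB_nup_nw3 u k : ~~ upB u -> ~~ w3 u -> cB u k = dnB u.
Proof. by rewrite /cB => /negbTE -> /negbTE ->. Qed.

Lemma cB_dn u k : dnB u -> cB u k.
Proof.
move=> d; case: (boolP (upB u)) => [uu|nu].
  rewrite (R_antisym uu d) /cB /upB R_refl; exact: fp_term.
by rewrite cB_nup_nw3 // dn_nw3.
Qed.

Lemma PB_up e : PB e -> upB (hd e) -> ptr v w3 (tl e) = Some e.
Proof.
rewrite /PB => /orP[/orP[/orP[/eqP //|/andP[_ /eqP p]]|/andP[n _]]|/andP[/andP[n _] _]] u.
- by have [_ _ /negP] := pex_spec p.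
- by move: (nup_fw n); rewrite u.
- by rewrite u in n.
Qed.

Lemma PB_w3 e : PB e -> ~~ upB (hd e) -> w3 (hd e) ->
  (exitb (tl e) && (pex (tl e) == Some e)) || (~~ upB (tl e) && (ptr t3 predT (tl e) == Some e)).
Proof.
rewrite /PB => /orP[/orP[/orP[/eqP p|->//]|->]|/andP[/andP[_ n] _]] nu w; last 2 first.
- by rewrite orbT.
- by rewrite w in n.
by have [_ r _] := ptr_spec p; rewrite /upB r in nu.
Qed.

Lemma PB_dn e : PB e -> ~~ upB (hd e) -> ~~ w3 (hd e) -> pTB (hd e) = Some e.
Proof.
rewrite /PB => /orP[/orP[/orP[/eqP p|/andP[_ /eqP p]]|/andP[_ /eqP p]]|/andP[_ /eqP //]] nu nw.
- by have [_ r _] := ptr_spec p; rewrite /upB r in nu.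
- by have [_ w _] := pex_spec p; rewrite w in nw.
- by have [_ r _] := ptr_spec p; rewrite /w3 r in nw.
Qed.

Lemma lab3 e k : ~~ upB (tl e) -> w3 (tl e) -> cB (tl e) k ->
  exists x e0, [/\ exitb x, fconnect fvB (s k) x, pex x = Some e0 & fconnect f3 (hd e0) (tl e)].
Proof.
move=> nu w; rewrite cB_nup_w3 // => /existsP[x /andP[/andP[ex cx]]].
by case px: (pex x) => [e0|] // c3; exists x, e0.
Qed.

Lemma labx x k : exitb x -> cB x k -> fconnect fvB (s k) x.
Proof. by move=> /andP[/andP[u _] _]; rewrite /cB u. Qed.

Lemma mixB e1 e2 k : exitb (tl e1) -> pex (tl e1) = Some e1 ->
  ~~ upB (tl e2) -> ptr t3 predT (tl e2) = Some e2 -> hd e1 = hd e2 ->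
  cB (tl e1) k -> cB (tl e2) k -> False.
Proof.
move=> x1 p1 n2 p2 h12 c1 c2.
have c1' := labx x1 c1.
have [_ w1 _] := pex_spec p1.
have wt2 : w3 (tl e2) by apply: R_trans (R_edge e2) _; rewrite -h12.
have [x [e0 [ex cx p0 c3]]] := lab3 n2 wt2 c2.
have ex1 := exit_uniq ex x1 cx c1'; rewrite ex1 p1 in p0; case: p0 => e10.
rewrite -e10 h12 in c3.
by have := acyc e2; rewrite (fp_R c3).
Qed.

Lemma caseB (K : fieldType) :
 exists (a : E -> K) (b : E -> E -> K) (d : 'I_3 -> E -> K),
   forall X Y, consistent tl hd s a b X Y -> forall j, recovers_sum hd t d X Y j.
Proof.
apply: (@key K PB cB).
- move=> i k; rewrite /cB /upB hS.
  apply/idP/idP => [/fp_R /R_to_src /s_inj ->//|/eqP ->]; exact: connect0.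
-
  move=> u k ns; case: (boolP (upB u)) => [uu|nu].
    rewrite /cB uu => c.
    have ne : s k != u by rewrite eq_sym ns.
    have [w [cw fw nw]] := fconnect_last c ne.
    rewrite /fvB in fw cw.
    have nw' : fp v w3 w != w by rewrite fw eq_sym.
    have [e [pe te he]] := fp_ptr nw'.
    have uw : upB w by apply: R_trans _ uu; have := R_edge e; rewrite te he fw.
    exists e; split; first by rewrite /PB te pe eqxx.
      by rewrite he.
    by rewrite te /cB uw.
  case: (boolP (w3 u)) => [wu|nwu].
    rewrite cB_nup_w3 // => /existsP[x /andP[/andP[ex cx]]].
    case px: (pex x) => [e0|] // c3.
    have [te0 we0 ne0] := pex_spec px.
    case: (eqVneq (hd e0) u) => [h0|hne].
      exists e0; split => //; first by rewrite /PB te0 ex px eqxx /= orbT.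
      by move: ex => /andP[/andP[ux _] _]; rewrite te0 /cB ux.
    have [w [cw fw nw]] := fconnect_last c3 hne.
    rewrite /f3 in fw cw.
    have nw' : fp t3 predT w != w by rewrite fw eq_sym.
    have [e [pe te he]] := fp_ptr nw'.
    have nuw : ~~ upB w.
      apply: (@fp_Rz t3 predT (fun y => ~~ upB y) _ _ _ cw ne0) => e' y <-; exact: nup_fw.
    have ww : w3 w by apply: R_trans _ wu; have := R_edge e; rewrite te he fw.
    exists e; split; first by rewrite /PB te nuw pe eqxx /= ?orbT.
      by rewrite he.
    rewrite te cB_nup_w3 //; apply/existsP; exists x; by rewrite ex cx px.
  rewrite cB_nup_nw3 // => d.
  have nv : v != u by apply: contraTneq nu => <-; by rewrite /upB R_refl.
  have [e pe] : exists e, pTB u = Some e.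
    rewrite /pTB; case: pickP => [e _|none]; first by exists e.
    have [e [he de]] := R_last d nv; by move: (none e); rewrite he eqxx /dnB de.
  have [he de] : hd e = u /\ dnB (tl e).
    by move: pe; rewrite /pTB; case: pickP => // e' /andP[/eqP h dd] [<-].
  exists e; split => //; first by rewrite /PB he nu nwu pe eqxx /= !orbT.
  exact: cB_dn.
-
  move=> e1 e2 k P1 P2 h12 c1 c2.
  case: (boolP (upB (hd e1))) => [u1|nu1].
    have u2 : upB (hd e2) by rewrite -h12.
    have p1 := PB_up P1 u1; have p2 := PB_up P2 u2.
    have ut1 : upB (tl e1) := R_trans (R_edge e1) u1.
    have ut2 : upB (tl e2) := R_trans (R_edge e2) u2.
    rewrite /cB ut1 in c1; rewrite /cB ut2 in c2.
    have t12 : tl e1 = tl e2.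
      apply: (fp_uniq c1 c2).
      - by rewrite (fp_edge p1) (fp_edge p2) h12.
      - by rewrite (fp_edge p1) hd_neq_tl.
      - by rewrite (fp_edge p2) hd_neq_tl.
    by move: p1; rewrite t12 p2 => -[->].
  have nu2 : ~~ upB (hd e2) by rewrite -h12.
  case: (boolP (w3 (hd e1))) => [w1|nw1]; last first.
    have nw2 : ~~ w3 (hd e2) by rewrite -h12.
    by have := PB_dn P1 nu1 nw1; rewrite h12 (PB_dn P2 nu2 nw2) => -[->].
  have w2 : w3 (hd e2) by rewrite -h12.
  case/orP: (PB_w3 P1 nu1 w1) => /andP[x1 /eqP p1];
    case/orP: (PB_w3 P2 nu2 w2) => /andP[x2 /eqP p2].
  + have ex := exit_uniq x1 x2 (labx x1 c1) (labx x2 c2).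
    by move: p1; rewrite ex p2 => -[->].
  + by case: (mixB x1 p1 x2 p2 h12 c1 c2).
  + by case: (mixB x2 p2 x1 p1 (esym h12) c2 c1).
  have wt1 : w3 (tl e1) := R_trans (R_edge e1) w1.
  have wt2 : w3 (tl e2) := R_trans (R_edge e2) w2.
  have [y1 [f1 [ey1 cy1 py1 d1]]] := lab3 x1 wt1 c1.
  have [y2 [f2 [ey2 cy2 py2 d2]]] := lab3 x2 wt2 c2.
  have ey := exit_uniq ey1 ey2 cy1 cy2; rewrite ey py2 in py1; case: py1 => ef.
  rewrite -ef in d1.
  have t12 : tl e1 = tl e2.
    apply: (fp_uniq d1 d2).
    - by rewrite (fp_edge p1) (fp_edge p2) h12.
    - by rewrite (fp_edge p1) hd_neq_tl.
    - by rewrite (fp_edge p2) hd_neq_tl.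
  by move: p1; rewrite t12 p2 => -[->].
-
  move=> e k Pe; case: (boolP (upB (hd e))) => [u|nu].
    have p := PB_up Pe u; have ut : upB (tl e) := R_trans (R_edge e) u.
    rewrite /cB ut u /fvB -(fp_edge p) => c; exact: connect_trans c (fconnect1 _ _).
  case: (boolP (w3 (hd e))) => [w|nw]; last first.
    have p := PB_dn Pe nu nw.
    have [he de] : hd e = hd e /\ dnB (tl e).
      by move: p; rewrite /pTB; case: pickP => // e' /andP[/eqP h dd] [<-].
    move=> _; apply: cB_dn; exact: R_trans de (R_edge e).
  rewrite (cB_nup_w3 _ nu w); case/orP: (PB_w3 Pe nu w) => /andP[ex /eqP p].
    move=> c; have c' := labx ex c.
    apply/existsP; exists (tl e); rewrite ex c' p /=; exact: connect0.
  have wt : w3 (tl e) := R_trans (R_edge e) w.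
  move=> c; have [x [e0 [ex' cx p0 c3]]] := lab3 ex wt c.
  apply/existsP; exists x; rewrite ex' cx p0 /f3 -(fp_edge p).
  exact: connect_trans c3 (fconnect1 _ _).
-
  move=> j k; case: (eqVneq j j0) => [->|ne].
    rewrite -/t3 cB_nup_w3 ?t3_nup ?/w3 ?R_refl //.
    have [x /andP[ex cx]] := exit_ex k; have [e0 p0] := pex_ex ex.
    apply/existsP; exists x; rewrite ex cx p0; have [_ w _] := pex_spec p0.
    exact: fp_term w.
  have nu : ~~ upB (t j).
    apply/negP => r; have ev := R_from_term r; have [c /andP[c1 c2]] := other2 j j0.
    by move: (hT c); rewrite c2 ev => /R_from_term /t_inj /eqP; rewrite (negbTE c1).
  have nw : ~~ w3 (t j).
    apply/negP => r; have := R_from_term r; rewrite /t3 => /t_inj /eqP.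
    by rewrite eq_sym (negbTE ne).
  by rewrite cB_nup_nw3 // /dnB hT ne.
Qed.

End CaseB.


Lemma card3_all (A : {set 'I_3}) : #|A| = 3%N -> forall i, i \in A.
Proof.
move=> h; have : A == setT by rewrite eqEcard subsetT cardsT card_ord h.
by move/eqP => -> i; rewrite inE.
Qed.

Lemma card2_one (A : {set 'I_3}) : #|A| = 2%N -> exists k0, forall i, (i \in A) = (i != k0).
Proof.
move=> h; have := cardsC A; rewrite h card_ord => /(congr1 (subn^~ 2%N)); rewrite addKn => h1.
have /cards1P [k0 hk] : #|~: A| == 1%N by rewrite h1.
by exists k0 => i; rewrite -[i \in A]negbK -in_setC hk inE.
Qed.

Lemma main_sec (exv : exists v : V, ((c_s tl hd s v, c_t tl hd t v) \in
                   [:: (3, 3); (2, 3); (3, 2)])%N) (K : finFieldType) :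
 exists (a : E -> K) (b : E -> E -> K) (d : 'I_3 -> E -> K),
   forall X Y, consistent tl hd s a b X Y -> forall j, recovers_sum hd t d X Y j.
Proof.
case: exv => v; rewrite !inE /c_s /c_t => /or3P[] /eqP [hs ht].
- apply: (@caseA v None) => [k|j].
    by have := card3_all hs k; rewrite inE => ->.
  by have := card3_all ht j; rewrite inE.
- have [k0 hk] := card2_one hs.
  apply: (@caseA v (Some k0)) => [k|j].
    by have := hk k; rewrite inE => ->; congr negb; apply/eqP/eqP => [->|[->]].
  by have := card3_all ht j; rewrite inE.
- have [j0 hj] := card2_one ht.
  apply: (@caseB v j0) => [k|j].
    by have := card3_all hs k; rewrite inE.
  by have := hj j; rewrite inE.
Qed.

End Net.

Theorem mainTheorem8 (V E : finType) (tl hd : E -> V) (s t : 'I_3 -> V) :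
  acyclic tl hd ->
  injective s -> injective t ->
  (forall (i : 'I_3) (e : E), hd e != s i) ->
  (forall (j : 'I_3) (e : E), tl e != t j) ->
  (forall i j : 'I_3, reaches tl hd (s i) (t j)) ->
  (exists v : V, ((c_s tl hd s v, c_t tl hd t v) \in
                   [:: (3, 3); (2, 3); (3, 2)])%N) ->
  forall F : finFieldType,
    exists (a : E -> F) (b : E -> E -> F) (d : 'I_3 -> E -> F),
      forall (X : 'I_3 -> F) (Y : E -> F),
        consistent tl hd s a b X Y ->
        forall j : 'I_3, recovers_sum hd t d X Y j.
Proof.
move=> ac si ti hs tt cn exv F; exact: (main_sec ac si ti hs tt cn exv).
Qed.
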